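(* For every $\beta\in(0,1)$ there is a constant $c$ such that for every $\varepsilon>0$, all positive integers $d$ and $m\le n$ with $d$ dividing $n$, every $x_1,\dots,x_n\in[-1,1]^d$, and every public-string-oblivious attacker $M$, \[ \Pr\left[\left\|\mathrm{Manip}_{m,n}(\mathtt{EST}\infty_{n,d,\varepsilon},\vec x,M)-\frac1n\sum_{i=1}^n x_i\right\|_\infty< c\cdot\frac{e^\varepsilon+1}{e^\varepsilon-1}\left(\sqrt{\frac dn\log\frac d\beta}+\frac mn\right)\right]\ge 1-\beta . \]
   Context: Randomized response: for $b\in\{\pm1\}$, $R^{RR}_\varepsilon(b)$ outputs $b\cdot\frac{e^\varepsilon+1}{e^\varepsilon-1}$ with probability $\frac{e^\varepsilon}{e^\varepsilon+1}$ and $-b\cdot\frac{e^\varepsilon+1}{e^\varepsilon-1}$ otherwise. Protocol $\mathtt{EST}\infty_{n,d,\varepsilon}$: the public randomness is a uniformly random partition $\pi$ of $[n]$ into $d$ groups $\pi(1),\dots,\pi(d)$ of size $n/d$ each. User $i$ with data $x_i\in[-1,1]^d$ in group $g(i)$ computes $x_i'\in\{\pm1\}$ with $\Pr[x_i'=+1]=\frac12+\frac{x_{i,g(i)}}{2}$, and sends $y_i\sim R^{RR}_\varepsilon(x_i')$. The aggregator outputs $z\in\mathbb R^d$ with $z_g=\frac dn\sum_{i\in\pi(g)}y_i$. Manipulation game $\mathrm{Manip}_{m,n}(\Pi,\vec x,M)$ for a protocol $\Pi$ with public randomness $S$, randomizers $R_i$ with message set $\mathcal Y$ and aggregator $A$: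 $S$ is sampled; the attacker $M$ chooses a set $C\subseteq[n]$ with $|C|=m$ and messages $y_i\in\mathcal Y$ for $i\in C$ (possibly depending on $\vec x$, $S$, and its own randomness); each $i\notin C$ independently sends $y_i\sim R_i(x_i,S)$; the output is $A(y_1,\dots,y_n,S)$. $M$ is public-string-oblivious if $C$ is chosen independently of $S$. Here the message set is $\{\pm\frac{e^\varepsilon+1}{e^\varepsilon-1}\}$. *)

(* Defs.v *)
From Stdlib Require Import Reals.
From mathcomp Require Import all_boot.
Set Implicit Arguments. Unset Strict Implicit. Unset Printing Implicit Defensive.
Local Open Scope R_scope.

Definition rr_scale (eps : R) : R := (exp eps + 1) / (exp eps - 1).

Definition msg (eps : R) (b : bool) : R := (if b then 1 else -1) * rr_scale eps.

(* Public randomness: a labeled partition pi of [n] into d groups of size n/d,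
   encoded as the group-assignment map g : [n] -> [d] (pi(j) = g^-1(j)). *)
Definition partitions (n d : nat) : {set {ffun 'I_n -> 'I_d}} :=
  [set g : {ffun 'I_n -> 'I_d} | [forall j : 'I_d, #|[set i | g i == j]| == n %/ d]].

(* Private randomness of an honest user: a pair (x', keep) of bits.
   x' = +1 with probability 1/2 + x/2;
   RR keeps the sign (outputs b * scale) with probability e^eps/(e^eps+1). *)
Definition coin_weight (eps xv : R) (c : bool * bool) : R :=
  (if c.1 then 1/2 + xv/2 else 1/2 - xv/2) *
  (if c.2 then exp eps / (exp eps + 1) else 1 / (exp eps + 1)).

Definition honest_bit (c : bool * bool) : bool := if c.2 then c.1 else ~~ c.1.

(* A (deterministic) public-string-oblivious attacker: a set C of corrupted
   users (chosen independently of the public string) and, for every value of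
   the public string, the messages of the corrupted users.  A randomized such
   attacker is a probability distribution on this finite type. *)
Definition attacker (n d : nat) : finType :=
  ({set 'I_n} * {ffun {ffun 'I_n -> 'I_d} -> {ffun 'I_n -> bool}})%type.

Definition manip_output (n d : nat) (eps : R) (a : attacker n d)
  (g : {ffun 'I_n -> 'I_d}) (coins : {ffun 'I_n -> bool * bool}) (j : 'I_d) : R :=
  INR d / INR n *
  \big[Rplus/0]_(i | g i == j)
     (msg eps (if i \in a.1 then a.2 g i else honest_bit (coins i))).

Definition mean (n d : nat) (x : 'I_n -> 'I_d -> R) (j : 'I_d) : R :=
  / INR n * \big[Rplus/0]_(i : 'I_n) (x i j).

Definition linf (d : nat) (v : 'I_d -> R) : R := \big[Rmax/0]_(j : 'I_d) Rabs (v j).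

Definition indicator (P : Prop) (dec : {P} + {~ P}) : R := if dec then 1 else 0.

(* Pr[ || Manip_{m,n}(EST_{n,d,eps}, x, M) - mean ||_inf < bound ],
   where the attacker M is given by the distribution w on attacker n d,
   independent of the public partition (uniform on partitions n d) and of the
   honest users' coins (independent across users). *)
Definition manip_prob (n d : nat) (eps : R) (x : 'I_n -> 'I_d -> R)
  (w : attacker n d -> R) (bound : R) : R :=
  \big[Rplus/0]_(a : attacker n d) (w a *
   \big[Rplus/0]_(g in partitions n d) (/ INR #|partitions n d| *
    \big[Rplus/0]_(coins : {ffun 'I_n -> bool * bool})
      ((\big[Rmult/1]_(i : 'I_n) coin_weight eps (x i (g i)) (coins i)) *
       indicator
        (Rlt_dec (linf (fun j => manip_output eps a g coins j - mean x j)) bound)))).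

Definition oblivious_attacker (n d m : nat) (w : attacker n d -> R) : Prop :=
  (forall a, 0 <= w a) /\ \big[Rplus/0]_(a : attacker n d) w a = 1 /\
  (forall a, w a <> 0 -> #|a.1| = m).

(* Main.v *)
Require Import Defs.
From Stdlib Require Import Reals Lra Lia Psatz Classical.
From HB Require Import structures.
From mathcomp Require Import all_boot.
Local Open Scope R_scope.


Lemma Rplus_assoc' : associative Rplus. Proof. move=> *; by rewrite Rplus_assoc. Qed.
Lemma Rmult_assoc' : associative Rmult. Proof. move=> *; by rewrite Rmult_assoc. Qed.
HB.instance Definition _ := Monoid.isComLaw.Build R 0 Rplus Rplus_assoc' Rplus_comm Rplus_0_l.
HB.instance Definition _ := Monoid.isComLaw.Build R 1 Rmult Rmult_assoc' Rmult_comm Rmult_1_l.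
HB.instance Definition _ := Monoid.isMulLaw.Build R 0 Rmult Rmult_0_l Rmult_0_r.
HB.instance Definition _ := Monoid.isAddLaw.Build R Rmult Rplus Rmult_plus_distr_r Rmult_plus_distr_l.

Section Gen.
Variables (I : Type) (r : seq I) (P : pred I).

Lemma sumR_le (F G : I -> R) : (forall i, P i -> F i <= G i) ->
  \big[Rplus/0]_(i <- r | P i) F i <= \big[Rplus/0]_(i <- r | P i) G i.
Proof. move=> H; apply: (big_ind2 (fun a b => a <= b)) => //; [lra| move=> *; lra]. Qed.

Lemma sumR_ge0 (F : I -> R) : (forall i, P i -> 0 <= F i) ->
  0 <= \big[Rplus/0]_(i <- r | P i) F i.
Proof. move=> H; apply: (big_ind (fun a => 0 <= a)) => //; [lra| move=> *; lra]. Qed.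

Lemma prodR_ge0 (F : I -> R) : (forall i, P i -> 0 <= F i) ->
  0 <= \big[Rmult/1]_(i <- r | P i) F i.
Proof. move=> H; apply: (big_ind (fun a => 0 <= a)) => //; [lra| move=> *; nra]. Qed.

Lemma prodR_le (F G : I -> R) : (forall i, P i -> 0 <= F i <= G i) ->
  \big[Rmult/1]_(i <- r | P i) F i <= \big[Rmult/1]_(i <- r | P i) G i.
Proof.
move=> H.
suff: 0 <= \big[Rmult/1]_(i <- r | P i) F i <= \big[Rmult/1]_(i <- r | P i) G i by case.
apply: (big_ind2 (fun a b => 0 <= a <= b)) => //; [lra| move=> *; nra].
Qed.

Lemma exp_sumR (F : I -> R) :
  exp (\big[Rplus/0]_(i <- r | P i) F i) = \big[Rmult/1]_(i <- r | P i) exp (F i).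
Proof. apply: (big_morph exp); [move=> *; apply: exp_plus | apply: exp_0]. Qed.

Lemma Rabs_sumR (F : I -> R) :
  Rabs (\big[Rplus/0]_(i <- r | P i) F i) <= \big[Rplus/0]_(i <- r | P i) Rabs (F i).
Proof.
apply: (big_ind2 (fun a b => Rabs a <= b)).
- rewrite Rabs_R0; lra.
- move=> a b c e H1 H2; apply: Rle_trans (Rabs_triang _ _) _; lra.
- by move=> *; lra.
Qed.

Lemma sumR_distrr c (F : I -> R) :
  c * \big[Rplus/0]_(i <- r | P i) F i = \big[Rplus/0]_(i <- r | P i) (c * F i).
Proof. exact: big_distrr. Qed.

Lemma sumR_split (F G : I -> R) :
  \big[Rplus/0]_(i <- r | P i) (F i + G i) = \big[Rplus/0]_(i <- r | P i) F i + \big[Rplus/0]_(i <- r | P i) G i.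
Proof. exact: big_split. Qed.

Lemma sumR_opp (F : I -> R) :
  \big[Rplus/0]_(i <- r | P i) (- F i) = - \big[Rplus/0]_(i <- r | P i) F i.
Proof. symmetry; apply: (big_morph Ropp); [move=> *; lra | lra]. Qed.

End Gen.

Lemma iter_plus1 k : iter k (Rplus 1) 0 = INR k.
Proof. elim: k => //= k IH; rewrite IH; change (1 + INR k = INR (S k)); rewrite S_INR; lra. Qed.

Lemma sum1_INR (T : finType) (A : {pred T}) :
  \big[Rplus/0]_(i in A) 1 = INR #|A|.
Proof. by rewrite big_const iter_plus1. Qed.

Lemma linf_lt d (v : 'I_d -> R) B : 0 < B -> (forall j, Rabs (v j) < B) -> linf v < B.
Proof.
move=> HB H; rewrite /linf; apply: (big_ind (fun a => a < B)) => //.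
by move=> a b; apply: Rmax_lub_lt.
Qed.
Lemma sum_bb (F : bool * bool -> R) :
  \big[Rplus/0]_(c : bool * bool) F c = F (true,true) + F (true,false) + (F (false,true) + F (false,false)).
Proof.
have := pair_big xpredT xpredT (fun (a b : bool) => F (a, b)).
rewrite /= => E.
rewrite (eq_bigr (fun p => F (p.1, p.2))); last by case.
rewrite -E.
by rewrite !big_bool /=.
Qed.

Lemma exp_quad {y} : y <= 1/2 -> exp y <= 1 + y + 2 * y^2.
Proof.
move=> Hy.
have H1 := exp_ineq1_le (- y).
have Hp : 0 < exp y by apply: exp_pos.
rewrite exp_Ropp in H1.
have H2 : 1 - y <= / exp y by lra.
have H3 : (1 - y) * exp y <= 1.
  have := Rmult_le_compat_r (exp y) _ _ (Rlt_le _ _ Hp) H2.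
  by rewrite Rinv_l; [lra|lra].
nra.
Qed.

Lemma exp_gt1 {eps} : 0 < eps -> 1 < exp eps.
Proof. move=> h; rewrite -exp_0; exact: exp_increasing. Qed.

Lemma scale_ge1 {eps} : 0 < eps -> 1 <= rr_scale eps.
Proof.
move=> h; have := exp_gt1 h; rewrite /rr_scale => hp.
apply: (Rmult_le_reg_r (exp eps - 1)); first lra.
rewrite /Rdiv Rmult_assoc Rinv_l; lra.
Qed.

Lemma cw_ge0 eps xv c : 0 < eps -> -1 <= xv <= 1 -> 0 <= coin_weight eps xv c.
Proof.
move=> h hx; have := exp_gt1 h => hp; rewrite /coin_weight.
apply: Rmult_le_pos; first by case: c.1; lra.
case: c.2; apply: Rmult_le_pos; try lra; apply: Rlt_le; apply: Rinv_0_lt_compat; lra.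
Qed.

Lemma cw_sum eps xv : 0 < eps -> \big[Rplus/0]_c coin_weight eps xv c = 1.
Proof.
move=> h; have := exp_gt1 h => hp; rewrite sum_bb /coin_weight /=.
field; lra.
Qed.

Lemma cw_mean eps xv : 0 < eps ->
  \big[Rplus/0]_c (coin_weight eps xv c * msg eps (honest_bit c)) = xv.
Proof.
move=> h; have := exp_gt1 h => hp; rewrite sum_bb /coin_weight /msg /rr_scale /=.
field; lra.
Qed.

Lemma msg_abs eps b : 0 < eps -> Rabs (msg eps b) = rr_scale eps.
Proof.
move=> h; have := scale_ge1 h => hs; rewrite /msg; case: b.
- rewrite Rmult_1_l Rabs_right; lra.
- rewrite Rabs_left; lra.
Qed.

Lemma coin_factor eps xv lam sg : 0 < eps -> -1 <= xv <= 1 -> 0 <= lam ->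
  (sg = 1 \/ sg = -1) -> lam * (4 * rr_scale eps) <= 1 ->
  \big[Rplus/0]_c (coin_weight eps xv c * exp (lam * sg * (msg eps (honest_bit c) - xv)))
  <= 1 + 8 * lam ^ 2 * rr_scale eps ^ 2.
Proof.
move=> h hx hl hsg hls.
set s := rr_scale eps in hls *.
have hs : 1 <= s by apply: scale_ge1.
apply: Rle_trans (_ : \big[Rplus/0]_c (coin_weight eps xv c *
   (1 + 8 * lam ^ 2 * s ^ 2 + lam * sg * (msg eps (honest_bit c) - xv))) <= _).
  apply: sumR_le => c _.
  apply: Rmult_le_compat_l; first exact: cw_ge0.
  have hm := msg_abs eps (honest_bit c) h.
  have hy : Rabs (msg eps (honest_bit c) - xv) <= 2 * s.
    apply: Rle_trans (Rabs_triang _ _) _; rewrite Rabs_Ropp; fold s in hm.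
    have : Rabs xv <= 1 by apply: Rabs_le; lra.
    lra.
  set y := lam * sg * (msg eps (honest_bit c) - xv).
  have hy2 : Rabs y <= lam * (2 * s).
    rewrite /y !Rabs_mult (Rabs_right lam); last lra.
    have -> : Rabs sg = 1 by case: hsg => ->; rewrite ?Rabs_R1 ?Rabs_m1 //; rewrite Rabs_Ropp Rabs_R1.
    nra.
  have hyle : y <= 1/2.
    have h0 := Rle_abs y.
    have h1 : lam * (2 * s) <= 1/2.
      have -> : lam * (2 * s) = (lam * (4 * s)) / 2 by field.
      lra.
    lra.
  apply: Rle_trans (exp_quad hyle) _.
  have : y ^ 2 <= (lam * (2 * s)) ^ 2.
    rewrite -(pow2_abs y); apply: pow_incr; split; [exact: Rabs_pos | exact: hy2].
  nra.
rewrite (eq_bigr (fun c => (1 + 8 * lam ^ 2 * s ^ 2) * coin_weight eps xv c +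
   (lam * sg * (coin_weight eps xv c * msg eps (honest_bit c)) + (- (lam * sg * xv)) * coin_weight eps xv c))); last by move=> c _; ring.
rewrite sumR_split sumR_split -!sumR_distrr (cw_sum _ _ h) (cw_mean _ _ h).
lra.
Qed.

Definition xi n d (g : {ffun 'I_n -> 'I_d}) (j : 'I_d) (i : 'I_n) : R :=
  if g i == j then 1 else 0.
Arguments xi {n d}.

Definition Wc n d eps (x : 'I_n -> 'I_d -> R) (g : {ffun 'I_n -> 'I_d})
  (coins : {ffun 'I_n -> bool * bool}) : R :=
  \big[Rmult/1]_i coin_weight eps (x i (g i)) (coins i).
Arguments Wc {n d}.

Lemma Wc_ge0 n d eps x g coins : 0 < eps -> (forall i j, -1 <= x i j <= 1) ->
  0 <= @Wc n d eps x g coins.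
Proof. move=> h hx; apply: prodR_ge0 => i _; exact: cw_ge0. Qed.

Lemma Wc_sum n d eps x g : 0 < eps ->
  \big[Rplus/0]_coins @Wc n d eps x g coins = 1.
Proof.
move=> h; rewrite /Wc -(bigA_distr_bigA (fun i c => coin_weight eps (x i (g i)) c)).
rewrite big1 // => i _; exact: cw_sum.
Qed.

Lemma exp_1plus y : 1 + y <= exp y.
Proof. exact: exp_ineq1_le. Qed.

Lemma coin_lemma n d eps (x : 'I_n -> 'I_d -> R) g j lam sg :
  0 < eps -> (forall i j, -1 <= x i j <= 1) -> 0 <= lam ->
  (sg = 1 \/ sg = -1) -> lam * (4 * rr_scale eps) <= 1 ->
  \big[Rplus/0]_coins (Wc eps x g coins *
     exp (lam * sg * \big[Rplus/0]_i (xi g j i * (msg eps (honest_bit (coins i)) - x i j))))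
  <= exp (8 * lam ^ 2 * rr_scale eps ^ 2 * \big[Rplus/0]_i xi g j i).
Proof.
move=> h hx hl hsg hls.
rewrite (eq_bigr (fun coins : {ffun 'I_n -> bool * bool} => \big[Rmult/1]_i (coin_weight eps (x i (g i)) (coins i) *
   exp (lam * sg * (xi g j i * (msg eps (honest_bit (coins i)) - x i j)))))); last first.
  move=> coins _; rewrite /Wc sumR_distrr exp_sumR; by rewrite -big_split.
rewrite -(bigA_distr_bigA (fun i c => coin_weight eps (x i (g i)) c *
   exp (lam * sg * (xi g j i * (msg eps (honest_bit c) - x i j))))).
rewrite sumR_distrr exp_sumR.
apply: prodR_le => i _; split.
  apply: sumR_ge0 => c _; apply: Rmult_le_pos; [exact: cw_ge0 | exact: Rlt_le (exp_pos _)].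
rewrite /xi; case: eqP => [<-|_].
  rewrite Rmult_1_r.
  under eq_bigr => c _ do rewrite Rmult_1_l.
  apply: Rle_trans (coin_factor eps _ lam sg h _ hl hsg hls) (exp_1plus _); exact: hx.
rewrite Rmult_0_r.
under eq_bigr => c _ do rewrite Rmult_0_l Rmult_0_r exp_0 Rmult_1_r.
rewrite cw_sum // exp_0; lra.
Qed.


Lemma exp_mono x y : x <= y -> exp x <= exp y.
Proof. case/Rle_lt_or_eq_dec => [h|->]; [left; exact: exp_increasing | right=> //]. Qed.

Lemma sum_const_ord n a : \big[Rplus/0]_(i < n) a = INR n * a.
Proof.
rewrite big_const_ord; elim: n => [|n IH] /=; first lra.
rewrite IH; change (a + INR n * a = INR (S n) * a); rewrite S_INR; lra.
Qed.

Section Part.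
Variables (n d k : nat) (hd : (0 < d)%N) (hnk : n = (k * d)%N) (j : 'I_d).
Local Notation P := (partitions n d).

Definition sw (a b : 'I_n) (i : 'I_n) : 'I_n :=
  if i == a then b else if i == b then a else i.

Lemma swK a b : involutive (sw a b).
Proof.
move=> i; rewrite /sw.
case: (eqVneq i a) => [->|hia]; first by case: (eqVneq b a) => [->|hba]; rewrite ?eqxx // (negbTE hba) eqxx.
case: (eqVneq i b) => [->|hib]; first by rewrite eqxx.
by rewrite (negbTE hia) (negbTE hib).
Qed.

Lemma sw_b a b : sw a b b = a.
Proof. by rewrite /sw; case: (eqVneq b a) => [->|h]; rewrite ?eqxx. Qed.

Lemma sw_other a b i : i != a -> i != b -> sw a b i = i.
Proof. by move=> h1 h2; rewrite /sw (negbTE h1) (negbTE h2). Qed.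

Definition hg a b (g : {ffun 'I_n -> 'I_d}) : {ffun 'I_n -> 'I_d} :=
  [ffun i => g (sw a b i)].

Lemma hgK a b : involutive (hg a b).
Proof. by move=> g; apply/ffunP => i; rewrite !ffunE swK. Qed.

Lemma hg_P a b g : (hg a b g \in P) = (g \in P).
Proof.
rewrite /partitions !inE; apply: eq_forallb => j'; congr (_ == _).
have -> : [set i | hg a b g i == j'] = sw a b @^-1: [set i | g i == j'].
  by apply/setP => i; rewrite !inE ffunE.
apply: card_preimset; exact: inv_inj (swK a b).
Qed.

Lemma sum_P_hg a b (F : {ffun 'I_n -> 'I_d} -> R) :
  \big[Rplus/0]_(g in P) F g = \big[Rplus/0]_(g in P) F (hg a b g).
Proof.
rewrite (reindex_inj (inv_inj (hgK a b))); apply: eq_bigl => g /=.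
by rewrite hg_P.
Qed.

Lemma sum_xi g : g \in P -> \big[Rplus/0]_i xi g j i = INR k.
Proof.
rewrite /partitions inE => /forallP /(_ j) /eqP hc.
have -> : \big[Rplus/0]_i xi g j i = \big[Rplus/0]_(i in [set i | g i == j]) 1.
  by rewrite [RHS]big_mkcond; apply: eq_bigr => i _; rewrite inE /xi.
by rewrite sum1_INR hc hnk mulnK.
Qed.

Definition Pf (f : {ffun 'I_n -> bool}) (a : 'I_n -> R) : R :=
  \big[Rmult/1]_i (if f i then a i else 1).

Definition rem (f : {ffun 'I_n -> bool}) i0 : {ffun 'I_n -> bool} :=
  [ffun i => f i && (i != i0)].

Lemma Pf_D1 (f : {ffun 'I_n -> bool}) (i0 : 'I_n) (a : 'I_n -> R) : f i0 -> Pf f a = a i0 * Pf (rem f i0) a.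
Proof.
move=> hf; rewrite /Pf (bigD1 i0) //= hf [X in _ = _ * X](bigD1 i0) //=.
rewrite ffunE eqxx andbF Rmult_1_l; congr (_ * _).
by apply: eq_bigr => i hi; rewrite ffunE hi andbT.
Qed.

Lemma xi01 (g : {ffun 'I_n -> 'I_d}) i : xi g j i = 0 \/ xi g j i = 1.
Proof. rewrite /xi; case: (_ == _); auto. Qed.

Lemma Pf_ge0 f (g : {ffun 'I_n -> 'I_d}) : 0 <= Pf f (xi g j).
Proof. apply: prodR_ge0 => i _; case: (f i); [case: (xi01 g i) => ->|]; lra. Qed.

Lemma Pf_idem (f : {ffun 'I_n -> bool}) i (g : {ffun 'I_n -> 'I_d}) : f i -> xi g j i * Pf f (xi g j) = Pf f (xi g j).
Proof.
move=> hf; rewrite (Pf_D1 _ _ _ hf) -Rmult_assoc.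
by case: (xi01 g i) => ->; rewrite ?Rmult_0_l ?Rmult_1_l.
Qed.

Definition Sf f := \big[Rplus/0]_(g in P) Pf f (xi g j).

Lemma Sf_ge0 f : 0 <= Sf f.
Proof. apply: sumR_ge0 => g _; exact: Pf_ge0. Qed.

Lemma Q_step (f : {ffun 'I_n -> bool}) i0 : f i0 -> Sf f <= / INR d * Sf (rem f i0).
Proof.
move=> hf0; set f' := rem f i0.
pose U i1 := \big[Rplus/0]_(g in P) (xi g j i1 * Pf f' (xi g j)).
have hS : Sf f = U i0 by apply: eq_bigr => g _; rewrite (Pf_D1 _ _ _ hf0).
have hf'0 : ~~ f' i0 by rewrite /f' /rem ffunE eqxx andbF.
have hU : forall i1, ~~ f' i1 -> U i1 = U i0.
  move=> i1 h1; rewrite /U (sum_P_hg i0 i1); apply: eq_bigr => g _.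
  rewrite {1}/xi ffunE sw_b; congr (_ * _).
  apply: eq_bigr => i _; case hi: (f' i) => //.
  rewrite /xi ffunE sw_other //.
    by move: hi; rewrite /f' /rem ffunE => /andP [].
  by apply/eqP => e; move: h1; rewrite -e hi.
pose cnt := #|[pred i | ~~ f' i]|.
pose N' := #|[pred i | f' i]|.
have hcard : (N' + cnt)%N = n.
  have e := cardC [pred i | f' i]; rewrite card_ord in e.
  apply: (etrans _ e); rewrite /N' /cnt.
  by congr (_ + _)%N; apply: eq_card.
have hcnt : (1 <= cnt)%N.
  by rewrite /cnt (cardD1 i0) inE hf'0.
have hsum1 : \big[Rplus/0]_(i1 | ~~ f' i1) U i1 = INR cnt * U i0.
  rewrite (eq_bigr (fun _ => U i0)); last by move=> i1 h1; apply: hU.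
  rewrite -(Rmult_1_l (U i0)) -big_distrl /= Rmult_1_l.
  by rewrite -sum1_INR.
have hsum2 : \big[Rplus/0]_(i1 | ~~ f' i1) U i1 = (INR k - INR N') * Sf f'.
  rewrite /U exchange_big /Sf sumR_distrr; apply: eq_bigr => g hg.
  have e1 : \big[Rplus/0]_i (xi g j i * Pf f' (xi g j)) = INR k * Pf f' (xi g j).
    by rewrite -big_distrl /= sum_xi.
  rewrite (bigID (fun i => f' i)) /= in e1.
  have e2 : \big[Rplus/0]_(i | true && f' i) (xi g j i * Pf f' (xi g j)) = INR N' * Pf f' (xi g j).
    rewrite (eq_bigr (fun _ => Pf f' (xi g j))); last by move=> i /= hi; exact: Pf_idem.
    rewrite -(Rmult_1_l (Pf f' (xi g j))) -big_distrl /= Rmult_1_l -sum1_INR.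
    by congr (_ * _); apply: eq_bigl => i.
  rewrite e2 in e1.
  move: e1; set T1 := \big[Rplus/0]_(i < n | _) _ => e1.
  lra.
have hn : INR n = INR k * INR d by rewrite hnk mult_INR.
have hc : INR cnt + INR N' = INR n by rewrite -hcard plus_INR; lra.
have hcpos : 1 <= INR cnt by apply: (le_INR 1); apply/leP.
have hdpos : 1 <= INR d by apply: (le_INR 1); apply/leP.
have hN0 : 0 <= INR N' by apply: pos_INR.
have hSf := Sf_ge0 f'.
have key : INR cnt * U i0 = (INR k - INR N') * Sf f' by rewrite -hsum1 hsum2.
rewrite hS.
have hkey2 : (INR k - INR N') * Sf f' <= INR cnt * (/ INR d * Sf f').
  have h1 : INR k - INR N' <= INR cnt * / INR d.
    apply: (Rmult_le_reg_r (INR d)); first lra.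
    rewrite Rmult_assoc Rinv_l; last lra.
    nra.
  have := Rmult_le_compat_r _ _ _ hSf h1; lra.
apply: (Rmult_le_reg_l (INR cnt)); first lra.
lra.
Qed.

Lemma Q_none (f : {ffun 'I_n -> bool}) : (forall i, f i = false) ->
  Sf f = INR #|P|.
Proof.
move=> hf; rewrite /Sf -sum1_INR; apply: eq_bigr => g _.
by rewrite /Pf big1 // => i _; rewrite hf.
Qed.

Lemma card_rem (f : {ffun 'I_n -> bool}) i0 : f i0 ->
  #|[pred i | f i]| = (#|[pred i | rem f i0 i]|).+1.
Proof.
move=> hf; rewrite (cardD1 i0) inE hf add1n; congr _.+1.
by apply: eq_card => i; rewrite !inE /rem ffunE andbC.
Qed.

Lemma Q_all (f : {ffun 'I_n -> bool}) : Sf f <= INR #|P| * Pf f (fun _ => / INR d).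
Proof.
have hdp : 0 < INR d by apply: lt_0_INR; apply/ltP.
move: {2}#|[pred i | f i]| (erefl #|[pred i | f i]|) => N; elim: N f => [|N IH] f hN.
  case: (pickP [pred i | f i]) => [i0 /= hi0 | hnone].
    by rewrite (cardD1 i0) inE hi0 in hN.
  rewrite Q_none; last by move=> i; have := hnone i.
  rewrite /Pf big1 ?Rmult_1_r; first lra.
  by move=> i _; have := hnone i; rewrite /= => ->.
case: (pickP [pred i | f i]) => [i0 /= hi0 | hnone]; last first.
  rewrite Q_none; last by move=> i; have := hnone i.
  rewrite /Pf big1 ?Rmult_1_r; first lra.
  by move=> i _; have := hnone i; rewrite /= => ->.
apply: Rle_trans (Q_step _ _ hi0) _.
rewrite (Pf_D1 _ _ _ hi0).
have hc : #|[pred i | rem f i0 i]| = N by move: hN; rewrite (card_rem _ _ hi0) => -[].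
have := IH _ hc.
have := Sf_ge0 (rem f i0).
have : 0 < / INR d by apply: Rinv_0_lt_compat.
move=> h1 h2 h3.
have := Rmult_le_compat_l _ _ _ (Rlt_le _ _ h1) h3.
move=> h; apply: (Rle_trans _ _ _ h); right.
by rewrite -!Rmult_assoc (Rmult_comm (/ INR d)).
Qed.

Lemma sum_Pf (a : 'I_n -> R) :
  \big[Rplus/0]_(f : {ffun 'I_n -> bool}) Pf f a = \big[Rmult/1]_i (a i + 1).
Proof.
rewrite /Pf -(bigA_distr_bigA (fun i (b : bool) => if b then a i else 1)).
by apply: eq_bigr => i _; rewrite big_bool.
Qed.

Lemma Pf_mul f (a b : 'I_n -> R) : Pf f a * Pf f b = Pf f (fun i => a i * b i).
Proof.
rewrite /Pf -big_split; apply: eq_bigr => i _ /=; case: (f i) => //; ring.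
Qed.

Lemma Pf_ge0' f (a : 'I_n -> R) : (forall i, 0 <= a i) -> 0 <= Pf f a.
Proof. move=> h; apply: prodR_ge0 => i _; case: (f i) => //; lra. Qed.

Lemma KL (v : 'I_n -> R) lam : (forall i, 0 <= v i <= 1) -> 0 <= lam <= 1/2 ->
  \big[Rplus/0]_(g in P) exp (lam * \big[Rplus/0]_i (xi g j i * v i))
  <= INR #|P| * exp (lam * (/ INR d * \big[Rplus/0]_i v i) + 2 * lam ^ 2 * INR k).
Proof.
move=> hv hl.
have hdp : 0 < INR d by apply: lt_0_INR; apply/ltP.
pose c i := exp (lam * v i) - 1.
have hc0 : forall i, 0 <= c i.
  move=> i; have h1 := exp_1plus (lam * v i); have h2 := hv i; rewrite /c; nra.
have step1 : forall g, exp (lam * \big[Rplus/0]_i (xi g j i * v i)) =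
    \big[Rplus/0]_(f : {ffun 'I_n -> bool}) (Pf f c * Pf f (xi g j)).
  move=> g; rewrite sumR_distrr exp_sumR.
  rewrite (eq_bigr (fun i => \big[Rplus/0]_(b : bool) (if b then xi g j i * c i else 1))); last first.
    move=> i _; rewrite big_bool /= /c /xi; case: (_ == _).
      rewrite !Rmult_1_l; lra.
    rewrite Rmult_0_l Rmult_0_r exp_0; lra.
  rewrite (bigA_distr_bigA (fun i (b : bool) => if b then xi g j i * c i else 1)).
  apply: eq_bigr => f _; rewrite Pf_mul /Pf; apply: eq_bigr => i _; case: (f i) => //; ring.
rewrite (eq_bigr _ (fun g _ => step1 g)) exchange_big /=.
apply: Rle_trans (_ : \big[Rplus/0]_(f : {ffun 'I_n -> bool}) (INR #|P| * Pf f (fun i => c i / INR d)) <= _).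
  apply: sumR_le => f _.
  rewrite -sumR_distrr.
  have := Q_all f; rewrite /Sf => h.
  have h0 := Pf_ge0' f _ hc0.
  apply: Rle_trans (Rmult_le_compat_l _ _ _ h0 h) _.
  right; rewrite Rmult_comm Rmult_assoc Pf_mul; congr (_ * _).
  rewrite /Pf; apply: eq_bigr => i _; case: (f i) => //; rewrite /Rdiv; ring.
rewrite -sumR_distrr sum_Pf.
apply: Rmult_le_compat_l; first exact: pos_INR.
apply: Rle_trans (_ : \big[Rmult/1]_i exp (c i / INR d) <= _).
  apply: prodR_le => i _; split.
    have h1 := hc0 i; have h2 : 0 <= c i / INR d by apply: Rmult_le_pos; [apply: hc0 | apply: Rlt_le; apply: Rinv_0_lt_compat].
    lra.
  have h1 := exp_1plus (c i / INR d); lra.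
rewrite -exp_sumR; apply: exp_mono.
apply: Rle_trans (_ : \big[Rplus/0]_i ((lam * v i + 2 * lam ^ 2) / INR d) <= _).
  apply: sumR_le => i _.
  have hq := @exp_quad (lam * v i).
  have h1 := hv i.
  have h2 : lam * v i <= 1/2 by clear -hl h1; nra.
  have h3 := hq h2.
  have h4 : (lam * v i) ^ 2 <= lam ^ 2 by clear -hl h1; apply: pow_incr; split; nra.
  rewrite /c /Rdiv; apply: Rmult_le_compat_r; first by apply: Rlt_le; apply: Rinv_0_lt_compat.
  clear -h3 h4; nra.
rewrite /Rdiv -big_distrl /= sumR_split -sumR_distrr sum_const_ord.
have hn : INR n = INR k * INR d by rewrite hnk mult_INR.
rewrite hn; right; field; lra.
Qed.
End Part.


Section Exist.
Variables (n d k : nat) (hd : (0 < d)%N) (hk : (0 < k)%N) (hnk : n = (k * d)%N).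

Lemma g0_lt (i : 'I_n) : (i %/ k < d)%N.
Proof. by rewrite ltn_divLR // mulnC -hnk. Qed.

Definition g0 : {ffun 'I_n -> 'I_d} := [ffun i => Ordinal (g0_lt i)].

Lemma h0_lt (j : 'I_d) (t : 'I_k) : (j * k + t < n)%N.
Proof.
rewrite hnk; apply: (@leq_trans (j * k + k)); first by rewrite ltn_add2l.
by rewrite -mulSnr mulnC leq_mul2l ltn_ord orbT.
Qed.

Lemma partitions_nonempty : (0 < #|partitions n d|)%N.
Proof.
apply/card_gt0P; exists g0; rewrite /partitions inE; apply/forallP => j.
pose h (t : 'I_k) : 'I_n := Ordinal (h0_lt j t).
have hinj : injective h by move=> t1 t2 /(congr1 val) /= /addnI /val_inj.
have -> : [set i | g0 i == j] = [set h t | t in [set: 'I_k]].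
  apply/setP => i; rewrite inE ffunE; apply/eqP/imsetP.
    move=> e; exists (Ordinal (ltn_pmod i hk)); first by rewrite inE.
    apply: val_inj => /=; rewrite {1}(divn_eq i k); congr (_ * _ + _)%N.
    by have := congr1 val e.
  case=> t _ ->; apply: val_inj => /=.
  by rewrite divnMDl // divn_small // addn0.
by rewrite card_imset // cardsT card_ord hnk mulnK.
Qed.
End Exist.


Lemma Et_ge1 lam X t : 0 <= lam -> t <= X -> 1 <= exp (lam * X) * exp (- (lam * t)).
Proof.
move=> hl ht; rewrite -exp_plus -exp_0; apply: exp_mono; nra.
Qed.

Lemma Et_lt1 lam X t : 0 <= lam -> exp (lam * X) * exp (- (lam * t)) < 1 -> X < t.
Proof. move=> hl h; apply: Rnot_le_lt => ht; have := Et_ge1 _ _ _ hl ht; lra. Qed.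

Lemma Et_ge0 lam X t : 0 <= exp (lam * X) * exp (- (lam * t)).
Proof. apply: Rmult_le_pos; apply: Rlt_le; apply: exp_pos. Qed.

Ltac genbig := repeat match goal with |- context [@bigop.body ?R ?I ?z ?r ?F] =>
  let S := fresh "S" in generalize (@bigop.body R I z r F); intro S end.

Lemma arith_final kr dd nn s q mm T1 D T3 NC :
  0 < kr -> 0 < dd -> nn = kr * dd -> 1 <= s -> 0 <= q ->
  Rabs T1 <= 2 * s * NC -> NC < mm / dd + 3 * kr * q ->
  Rabs D < 6 * s * kr * q -> Rabs T3 < 6 * kr * q ->
  Rabs (/ kr * (T1 + D + T3)) < 2 * s * (mm / nn) + 18 * s * q.
Proof.
move=> hk hd hn hs hq h1 h2 h3 h4.
have hZ : Rabs (T1 + D + T3) < 2 * s * (mm / dd) + 18 * s * kr * q.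
  have e1 := Rabs_triang (T1 + D) T3.
  have e2 := Rabs_triang T1 D.
  have e3 : 2 * s * NC < 2 * s * (mm / dd + 3 * kr * q) by apply: Rmult_lt_compat_l; lra.
  have e4 : 6 * kr * q <= 6 * s * kr * q.
    have : 0 <= kr * q by apply: Rmult_le_pos; lra.
    nra.
  lra.
rewrite Rabs_mult Rabs_right; last by apply: Rle_ge; apply: Rlt_le; apply: Rinv_0_lt_compat.
have hki : 0 < / kr by apply: Rinv_0_lt_compat.
apply: Rlt_le_trans (Rmult_lt_compat_l _ _ _ hki hZ) _.
right; rewrite hn; field; lra.
Qed.

Lemma sum_lin2 (I : finType) (F G H : I -> R) a b :
  (forall i, H i = a * F i + b * G i) ->
  \big[Rplus/0]_i H i = a * \big[Rplus/0]_i F i + b * \big[Rplus/0]_i G i.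
Proof. move=> h; rewrite (eq_bigr _ (fun i _ => h i)) sumR_split !sumR_distrr //. Qed.

Section Main.
Variables (eps : R) (n d k m : nat) (x : 'I_n -> 'I_d -> R).
Hypotheses (heps : 0 < eps) (hd : (0 < d)%N) (hk : (0 < k)%N) (hnk : n = (k * d)%N)
  (hx : forall i j, -1 <= x i j <= 1).
Local Notation P := (partitions n d).
Local Notation s := (rr_scale eps).
Local Notation kr := (INR k).

Definition Mi (a : attacker n d) (g : {ffun 'I_n -> 'I_d}) (coins : {ffun 'I_n -> bool * bool}) i :=
  msg eps (if i \in a.1 then a.2 g i else honest_bit (coins i)).
Definition Yi (coins : {ffun 'I_n -> bool * bool}) i := msg eps (honest_bit (coins i)).
Definition vC (a : attacker n d) i : R := if i \in a.1 then 1 else 0.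
Definition vp j i := (1 + x i j) / 2.
Definition vm j i := (1 - x i j) / 2.

Lemma hkr : 0 < kr.
Proof. apply: lt_0_INR; apply/ltP; exact: hk. Qed.
Lemma hdr : 0 < INR d.
Proof. apply: lt_0_INR; apply/ltP; exact: hd. Qed.
Lemma hnr : INR n = kr * INR d.
Proof. by rewrite hnk mult_INR. Qed.

Lemma sum_xiM (g : {ffun 'I_n -> 'I_d}) j (F : 'I_n -> R) :
  \big[Rplus/0]_(i | g i == j) F i = \big[Rplus/0]_i (xi g j i * F i).
Proof. by rewrite big_mkcond; apply: eq_bigr => i _; rewrite /xi; case: (_ == _) => /=; ring. Qed.

Lemma diff_eq a g coins j : g \in P ->
  manip_output eps a g coins j - mean x j =
  / kr * (\big[Rplus/0]_i (xi g j i * (Mi a g coins i - Yi coins i))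
        + \big[Rplus/0]_i (xi g j i * (Yi coins i - x i j))
        + (\big[Rplus/0]_i (xi g j i * x i j) - / INR d * \big[Rplus/0]_(i : 'I_n) x i j)).
Proof.
move=> hg; rewrite /manip_output /mean sum_xiM.
have -> : \big[Rplus/0]_i (xi g j i * msg eps (if i \in a.1 then a.2 g i else honest_bit (coins i)))
  = \big[Rplus/0]_i (xi g j i * (Mi a g coins i - Yi coins i))
        + \big[Rplus/0]_i (xi g j i * (Yi coins i - x i j))
        + \big[Rplus/0]_i (xi g j i * x i j).
  rewrite -!sumR_split. apply: eq_bigr => i _ /=; rewrite /Mi. move: (xi g j i) (msg _ _) (Yi coins i) (x i j) => A B C D; ring.
have hk0 := hkr; have hd0 := hdr.
rewrite hnr; genbig; field; lra.
Qed.


Lemma sum_vC (a : attacker n d) : #|a.1| = m -> \big[Rplus/0]_i vC a i = INR m.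
Proof.
move=> hm; rewrite -hm -sum1_INR [RHS]big_mkcond; apply: eq_bigr => i _.
by rewrite /vC.
Qed.

Lemma det_bound (a : attacker n d) (g : {ffun 'I_n -> 'I_d}) (coins : {ffun 'I_n -> bool * bool}) (j : 'I_d) q : #|a.1| = m -> g \in P -> 0 <= q ->
  \big[Rplus/0]_i (xi g j i * vC a i) - / INR d * \big[Rplus/0]_i vC a i < 3 * kr * q ->
  \big[Rplus/0]_i (xi g j i * (Yi coins i - x i j)) < 6 * s * kr * q ->
  - (\big[Rplus/0]_i (xi g j i * (Yi coins i - x i j))) < 6 * s * kr * q ->
  \big[Rplus/0]_i (xi g j i * vp j i) - / INR d * \big[Rplus/0]_i vp j i < 3 * kr * q ->
  \big[Rplus/0]_i (xi g j i * vm j i) - / INR d * \big[Rplus/0]_i vm j i < 3 * kr * q ->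
  Rabs (manip_output eps a g coins j - mean x j) < 2 * s * (INR m / INR n) + 18 * s * q.
Proof.
move=> hm hg hq h1 h2p h2m h3p h3m.
have hs := scale_ge1 heps.
have hk0 := hkr; have hd0 := hdr.
rewrite diff_eq //.
apply: (@arith_final _ (INR d) _ _ _ _ _ _ _ (\big[Rplus/0]_i (xi g j i * vC a i))) => //.
- exact: hnr.
- apply: Rle_trans (Rabs_sumR _ _ _ _) _; rewrite sumR_distrr; apply: sumR_le => i _.
  rewrite /xi /vC /Mi /Yi; case: (_ == _); last by rewrite !Rmult_0_l Rabs_R0; lra.
  rewrite !Rmult_1_l; case: (i \in a.1).
    apply: Rle_trans (Rabs_triang _ _) _; rewrite Rabs_Ropp !msg_abs //; lra.
  by rewrite Rminus_diag Rabs_R0; lra.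
- move: h1; rewrite sum_vC // /Rdiv; lra.
- apply: Rabs_def1; lra.
- have e1 := sum_lin2 _ (fun i => xi g j i * vp j i) (fun i => xi g j i * vm j i) (fun i => xi g j i * x i j) 1 (-1)
     (fun i => ltac:(rewrite /vp /vm; move: (xi g j i) (x i j) => u w; field)).
  have e2 := sum_lin2 _ (fun i => xi g j i * vp j i) (fun i => xi g j i * vm j i) (fun i => xi g j i) 1 1
     (fun i => ltac:(rewrite /vp /vm; move: (xi g j i) (x i j) => u w; field)).
  have e3 : \big[Rplus/0]_(i : 'I_n) x i j = 1 * \big[Rplus/0]_i vp j i + -1 * \big[Rplus/0]_i vm j i := sum_lin2 _ (fun i => vp j i) (fun i => vm j i) (fun i => x i j) 1 (-1)
     (fun i => ltac:(rewrite /vp /vm; move: (x i j) => w; field)).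
  have e4 := sum_lin2 _ (fun i => vp j i) (fun i => vm j i) (fun i => 1) 1 1
     (fun i => ltac:(rewrite /vp /vm; move: (x i j) => w; field)).
  rewrite (@sum_xi n d k hd hnk j g hg) in e2.
  rewrite sum_const_ord Rmult_1_r in e4.
  move: e1 e2 e3 e4 h3p h3m; rewrite hnr.
  genbig => e1 e2 e3 e4 h3p h3m.
  have f1 : / INR d * S3 + / INR d * S4 = kr.
    rewrite -Rmult_plus_distr_l; have -> : S3 + S4 = kr * INR d by lra.
    field; lra.
  have f2 : / INR d * S2 = / INR d * S3 - / INR d * S4 by rewrite e3; ring.
  apply: Rabs_def1; lra.
Qed.

Definition E1f (lam t : R) (v : 'I_n -> R) (g : {ffun 'I_n -> 'I_d}) (j : 'I_d) : R :=
  exp (lam * \big[Rplus/0]_i (xi g j i * v i)) * exp (- (lam * (/ INR d * \big[Rplus/0]_i v i + t))).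

Definition E2f (lam sg t : R) (coins : {ffun 'I_n -> bool * bool}) (g : {ffun 'I_n -> 'I_d}) (j : 'I_d) : R :=
  exp (lam * sg * \big[Rplus/0]_i (xi g j i * (Yi coins i - x i j))) * exp (- (lam * t)).

Lemma E1_bound lam t v j : (forall i, 0 <= v i <= 1) -> 0 <= lam <= 1/2 ->
  \big[Rplus/0]_(g in P) E1f lam t v g j <= INR #|P| * exp (2 * lam ^ 2 * kr - lam * t).
Proof.
move=> hv hl; rewrite /E1f -big_distrl /=.
have := @KL n d k hd hnk j v lam hv hl.
have h0 : 0 < exp (- (lam * (/ INR d * \big[Rplus/0]_i v i + t))) by apply: exp_pos.
move=> h; apply: Rle_trans (Rmult_le_compat_r _ _ _ (Rlt_le _ _ h0) h) _.
rewrite Rmult_assoc -exp_plus; right; congr (_ * exp _).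
genbig; ring.
Qed.

Lemma E2_bound lam sg t g j : g \in P -> 0 <= lam -> (sg = 1 \/ sg = -1) -> lam * (4 * s) <= 1 ->
  \big[Rplus/0]_coins (Wc eps x g coins * E2f lam sg t coins g j)
  <= exp (8 * lam ^ 2 * s ^ 2 * kr - lam * t).
Proof.
move=> hg hl hsg hls; rewrite /E2f.
under eq_bigr => coins _ do rewrite -Rmult_assoc.
rewrite -big_distrl /=.
have := @coin_lemma n d eps x g j lam sg heps hx hl hsg hls.
rewrite (@sum_xi n d k hd hnk j g hg) => h.
have h0 : 0 < exp (- (lam * t)) by apply: exp_pos.
apply: Rle_trans (Rmult_le_compat_r _ _ _ (Rlt_le _ _ h0) h) _.
rewrite -exp_plus; right; congr exp; ring.
Qed.

Definition Tq (q : R) (a : attacker n d) (g : {ffun 'I_n -> 'I_d}) (coins : {ffun 'I_n -> bool * bool}) (j : 'I_d) : R :=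
  E1f (q / 2) (3 * kr * q) (vC a) g j + E1f (q / 2) (3 * kr * q) (vp j) g j
  + E1f (q / 2) (3 * kr * q) (vm j) g j
  + E2f (q / (4 * s)) 1 (6 * s * kr * q) coins g j + E2f (q / (4 * s)) (-1) (6 * s * kr * q) coins g j.

Lemma E1f_ge0 lam t v g j : 0 <= E1f lam t v g j.
Proof. exact: Et_ge0. Qed.
Lemma E2f_ge0 lam sg t coins g j : 0 <= E2f lam sg t coins g j.
Proof. rewrite /E2f; apply: Rmult_le_pos; apply: Rlt_le; apply: exp_pos. Qed.

Lemma Tq_ge0 q a g coins j : 0 <= Tq q a g coins j.
Proof.
rewrite /Tq; have := E1f_ge0 (q/2) (3 * kr * q) (vC a) g j;
have := E1f_ge0 (q/2) (3 * kr * q) (vp j) g j; have := E1f_ge0 (q/2) (3 * kr * q) (vm j) g j;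
have := E2f_ge0 (q / (4 * s)) 1 (6 * s * kr * q) coins g j;
have := E2f_ge0 (q / (4 * s)) (-1) (6 * s * kr * q) coins g j; lra.
Qed.

Lemma E1f_lt1 lam t v g j : 0 <= lam -> E1f lam t v g j < 1 ->
  \big[Rplus/0]_i (xi g j i * v i) - / INR d * \big[Rplus/0]_i v i < t.
Proof. move=> hl h; have := Et_lt1 _ _ _ hl h; lra. Qed.

Lemma pointwise q B (a : attacker n d) g coins : #|a.1| = m -> (0 < m)%N -> g \in P -> 0 <= q ->
  2 * s * (INR m / INR n) + 18 * s * q <= B ->
  1 - indicator (Rlt_dec (linf (fun j => manip_output eps a g coins j - mean x j)) B)
  <= \big[Rplus/0]_j Tq q a g coins j.
Proof.
move=> hm hm0 hg hq hB.
have hs := scale_ge1 heps.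
have hsum0 : 0 <= \big[Rplus/0]_j Tq q a g coins j by apply: sumR_ge0 => j _; exact: Tq_ge0.
rewrite /indicator; case: Rlt_dec => hl /=; first by rewrite Rminus_diag; exact: hsum0.
case: (classic (exists j, 1 <= Tq q a g coins j)) => [[j hj] | hno].
  rewrite (bigD1 j) //=.
  have H : 0 <= \big[Rplus/0]_(i | i != j) Tq q a g coins i by apply: sumR_ge0 => i _; exact: Tq_ge0.
  apply: (Rle_trans _ (Tq q a g coins j + 0)); first lra.
  apply: Rplus_le_compat_l; exact: H.
exfalso; apply: hl.
have hmpos : 0 < INR m / INR n.
  apply: Rdiv_lt_0_compat; first by apply: lt_0_INR; apply/ltP.
  rewrite hnr; apply: Rmult_lt_0_compat; [exact: hkr | exact: hdr].
apply: linf_lt.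
  have : 0 <= 18 * s * q by apply: Rmult_le_pos; lra.
  have : 0 < 2 * s * (INR m / INR n) by apply: Rmult_lt_0_compat; lra.
  lra.
move=> j.
have hTj : Tq q a g coins j < 1 by apply: Rnot_le_lt => h; apply: hno; exists j.
move: hTj; rewrite /Tq.
have h1 := E1f_ge0 (q/2) (3 * kr * q) (vC a) g j.
have h2 := E1f_ge0 (q/2) (3 * kr * q) (vp j) g j.
have h3 := E1f_ge0 (q/2) (3 * kr * q) (vm j) g j.
have h4 := E2f_ge0 (q / (4 * s)) 1 (6 * s * kr * q) coins g j.
have h5 := E2f_ge0 (q / (4 * s)) (-1) (6 * s * kr * q) coins g j.
move=> hT.
have hl1 : 0 <= q / 2 by lra.
have hl2 : 0 <= q / (4 * s).
  apply: Rmult_le_pos; first lra; apply: Rlt_le; apply: Rinv_0_lt_compat; lra.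
apply: Rlt_le_trans hB.
apply: (@det_bound a g coins j q) => //.
- apply: E1f_lt1 hl1 _; lra.
- have : E2f (q / (4 * s)) 1 (6 * s * kr * q) coins g j < 1 by lra.
  rewrite /E2f Rmult_1_r => h; exact: Et_lt1 _ _ _ hl2 h.
- have : E2f (q / (4 * s)) (-1) (6 * s * kr * q) coins g j < 1 by lra.
  rewrite /E2f; move: (\big[Rplus/0]_i _) => D.
  rewrite (_ : q / (4 * s) * -1 * D = q / (4 * s) * (- D)); last by ring.
  move=> h; exact: Et_lt1 _ _ _ hl2 h.
- apply: E1f_lt1 hl1 _; lra.
- apply: E1f_lt1 hl1 _; lra.
Qed.

Lemma sumP_const (c : R) : \big[Rplus/0]_(g in P) c = INR #|P| * c.
Proof. by rewrite -(Rmult_1_l c) -big_distrl /= sum1_INR Rmult_1_l. Qed.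

Lemma EX q (a : attacker n d) j : 0 <= q <= 1 ->
  \big[Rplus/0]_(g in P) \big[Rplus/0]_coins (Wc eps x g coins * Tq q a g coins j)
  <= 5 * INR #|P| * exp (- (kr * q ^ 2)).
Proof.
move=> hq.
have hs := scale_ge1 heps.
set e := exp (- (kr * q ^ 2)).
have ee1 : 2 * (q / 2) ^ 2 * kr - q / 2 * (3 * kr * q) = - (kr * q ^ 2) by field.
have ee2 : 8 * (q / (4 * s)) ^ 2 * s ^ 2 * kr - q / (4 * s) * (6 * s * kr * q) = - (kr * q ^ 2).
  field; lra.
have hl1 : 0 <= q / 2 <= 1/2 by lra.
have hl2 : 0 <= q / (4 * s).
  apply: Rmult_le_pos; first lra; apply: Rlt_le; apply: Rinv_0_lt_compat; lra.
have hl2' : q / (4 * s) * (4 * s) <= 1 by rewrite /Rdiv Rmult_assoc Rinv_l; lra.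
have hvC : forall i, 0 <= vC a i <= 1 by move=> i; rewrite /vC; case: (_ \in _); lra.
have hvp : forall i, 0 <= vp j i <= 1 by move=> i; rewrite /vp; have := hx i j; lra.
have hvm : forall i, 0 <= vm j i <= 1 by move=> i; rewrite /vm; have := hx i j; lra.
pose A3 g := E1f (q / 2) (3 * kr * q) (vC a) g j + E1f (q / 2) (3 * kr * q) (vp j) g j
  + E1f (q / 2) (3 * kr * q) (vm j) g j.
have hgb : forall g, g \in P ->
  \big[Rplus/0]_coins (Wc eps x g coins * Tq q a g coins j) <= A3 g + 2 * e.
  move=> g hg.
  rewrite /Tq.
  under eq_bigr => coins _ do rewrite !Rmult_plus_distr_l.
  rewrite !sumR_split -!big_distrl /= !Wc_sum // !Rmult_1_l.
  have b1 := E2_bound (q / (4 * s)) 1 (6 * s * kr * q) g j hg hl2 (or_introl erefl) hl2'.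
  have b2 := E2_bound (q / (4 * s)) (-1) (6 * s * kr * q) g j hg hl2 (or_intror erefl) hl2'.
  rewrite ee2 -/e in b1 b2; rewrite /A3.
  apply: Rle_trans (Rplus_le_compat (_ + _ + _ + _) _ _ _ (Rplus_le_compat_l _ _ _ b1) b2) _.
  lra.
apply: Rle_trans (_ : \big[Rplus/0]_(g in P) (A3 g + 2 * e) <= _).
  by apply: sumR_le => g hg; apply: hgb.
rewrite /A3 !sumR_split sumP_const.
have c1 := E1_bound (q / 2) (3 * kr * q) (vC a) j hvC hl1.
have c2 := E1_bound (q / 2) (3 * kr * q) (vp j) j hvp hl1.
have c3 := E1_bound (q / 2) (3 * kr * q) (vm j) j hvm hl1.
rewrite ee1 in c1 c2 c3.
rewrite -/e in c1 c2 c3.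
lra.
Qed.

Lemma triv_bound (a : attacker n d) g coins j : g \in P ->
  Rabs (manip_output eps a g coins j - mean x j) <= 2 * s.
Proof.
move=> hg.
have hs := scale_ge1 heps.
have hk0 := hkr; have hd0 := hdr.
rewrite /manip_output /mean sum_xiM.
apply: Rle_trans (Rabs_triang _ _) _; rewrite Rabs_Ropp.
have h1 : Rabs (INR d / INR n * \big[Rplus/0]_i (xi g j i * msg eps (if i \in a.1 then a.2 g i else honest_bit (coins i)))) <= s.
  rewrite Rabs_mult Rabs_right; last first.
    apply: Rle_ge; rewrite hnr /Rdiv; apply: Rmult_le_pos; first lra.
    apply: Rlt_le; apply: Rinv_0_lt_compat; apply: Rmult_lt_0_compat; lra.
  apply: Rle_trans (_ : INR d / INR n * (kr * s) <= _); last by right; rewrite hnr; field; lra.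
  apply: Rmult_le_compat_l.
    rewrite hnr /Rdiv; apply: Rmult_le_pos; first lra.
    apply: Rlt_le; apply: Rinv_0_lt_compat; apply: Rmult_lt_0_compat; lra.
  apply: Rle_trans (Rabs_sumR _ _ _ _) _.
  rewrite -(@sum_xi n d k hd hnk j g hg) Rmult_comm sumR_distrr; apply: sumR_le => i _.
  rewrite Rabs_mult msg_abs // /xi; case: (_ == _).
    rewrite Rabs_R1; lra.
  rewrite Rabs_R0; lra.
have h2 : Rabs (/ INR n * \big[Rplus/0]_(i : 'I_n) x i j) <= 1.
  have hn0 : 0 < INR n by rewrite hnr; apply: Rmult_lt_0_compat.
  rewrite Rabs_mult Rabs_right; last by apply: Rle_ge; apply: Rlt_le; apply: Rinv_0_lt_compat.
  apply: Rle_trans (_ : / INR n * INR n <= _); last by right; field; lra.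
  apply: Rmult_le_compat_l; first by apply: Rlt_le; apply: Rinv_0_lt_compat.
  apply: Rle_trans (Rabs_sumR _ _ _ _) _.
  rewrite -(Rmult_1_r (INR n)) -sum_const_ord; apply: sumR_le => i _.
  apply: Rabs_le; have := hx i j; lra.
lra.
Qed.

Definition Ind (B : R) (a : attacker n d) g coins : R :=
  indicator (Rlt_dec (linf (fun j => manip_output eps a g coins j - mean x j)) B).

Lemma Ind01 B a g coins : Ind B a g coins = 0 \/ Ind B a g coins = 1.
Proof. rewrite /Ind /indicator; case: Rlt_dec; auto. Qed.

Lemma inner_bound q B beta (a : attacker n d) : #|a.1| = m -> (0 < m)%N -> 0 <= q ->
  2 * s * (INR m / INR n) + 18 * s * q <= B -> (1 < q -> 2 * s < B) ->
  5 * INR d * exp (- (kr * q ^ 2)) <= beta ->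
  1 - beta <= \big[Rplus/0]_(g in P) (/ INR #|P| * \big[Rplus/0]_coins
     (Wc eps x g coins * Ind B a g coins)).
Proof.
move=> hm hm0 hq hB1 hB2 he.
have hs := scale_ge1 heps.
have hZ : 0 < INR #|P| by apply: lt_0_INR; apply/ltP; exact: (@partitions_nonempty n d k hd hk hnk).
rewrite -sumR_distrr.
have hsplit : \big[Rplus/0]_(g in P) \big[Rplus/0]_coins (Wc eps x g coins * Ind B a g coins)
  = INR #|P| - \big[Rplus/0]_(g in P) \big[Rplus/0]_coins (Wc eps x g coins * (1 - Ind B a g coins)).
  have h1 : forall g, \big[Rplus/0]_coins (Wc eps x g coins * Ind B a g coins) =
     1 + - \big[Rplus/0]_coins (Wc eps x g coins * (1 - Ind B a g coins)).
    move=> g.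
    have : \big[Rplus/0]_coins (Wc eps x g coins * Ind B a g coins) +
       \big[Rplus/0]_coins (Wc eps x g coins * (1 - Ind B a g coins)) = 1.
      rewrite -sumR_split; transitivity (\big[Rplus/0]_coins Wc eps x g coins); last exact: Wc_sum.
      by apply: eq_bigr => coins _ /=; ring.
    lra.
  rewrite (eq_bigr _ (fun g _ => h1 g)) sumR_split sumR_opp sum1_INR //.
have hbad : \big[Rplus/0]_(g in P) \big[Rplus/0]_coins (Wc eps x g coins * (1 - Ind B a g coins))
  <= beta * INR #|P|.
  case: (Rle_lt_dec q 1) => hq1; last first.
    have hB : 2 * s < B by apply: hB2.
    have hb0 : 0 <= beta.
      apply: Rle_trans he; apply: Rmult_le_pos; last by apply: Rlt_le; apply: exp_pos.
      apply: Rmult_le_pos; [lra | apply: pos_INR].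
    apply: Rle_trans (_ : 0 <= _); last by apply: Rmult_le_pos; lra.
    right; apply: big1 => g hg; apply: big1 => coins _.
    rewrite /Ind /indicator; case: Rlt_dec => hl /=; first ring.
    exfalso; apply: hl; apply: linf_lt; first lra.
    move=> j; apply: Rle_lt_trans (triv_bound a g coins j hg) hB.
  apply: Rle_trans (_ : \big[Rplus/0]_(g in P) \big[Rplus/0]_coins
      (Wc eps x g coins * \big[Rplus/0]_j Tq q a g coins j) <= _).
    apply: sumR_le => g hg; apply: sumR_le => coins _.
    apply: Rmult_le_compat_l; first exact: Wc_ge0.
    exact: (pointwise _ _ _ _ _ hm hm0 hg hq hB1).
  under eq_bigr => g _ do under eq_bigr => coins _ do rewrite sumR_distrr.
  under eq_bigr => g _ do rewrite exchange_big /=.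
  rewrite exchange_big /=.
  apply: Rle_trans (_ : \big[Rplus/0]_(j : 'I_d) (5 * INR #|P| * exp (- (kr * q ^ 2))) <= _).
    apply: sumR_le => j _; apply: EX; lra.
  rewrite sum_const_ord.
  have hZ0 : 0 <= INR #|P| by lra.
  apply: Rle_trans (Rmult_le_compat_r _ _ _ hZ0 he); right; ring.
apply: (Rmult_le_reg_l (INR #|P|)) => //.
rewrite hsplit -Rmult_assoc Rinv_r; last lra.
lra.
Qed.

End Main.


Lemma ln_le' x y : 0 < x -> x <= y -> ln x <= ln y.
Proof. move=> hx; case/Rle_lt_or_eq_dec => [h|->]; [left; exact: ln_increasing | right=> //]. Qed.

Theorem mainTheorem10 :
  forall beta : R, 0 < beta < 1 ->
  exists c : R,
  forall (eps : R) (n d m : nat),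
    0 < eps ->
    (0 < d)%N -> (0 < m)%N -> (m <= n)%N -> (d %| n)%N ->
    forall x : 'I_n -> 'I_d -> R,
    (forall i j, -1 <= x i j <= 1) ->
    forall w : attacker n d -> R,
    oblivious_attacker m w ->
    manip_prob eps x w
      (c * rr_scale eps *
         (sqrt (INR d / INR n * ln (INR d / beta)) + INR m / INR n))
    >= 1 - beta.
Proof.
move=> beta hb.
have hib : 1 < / beta.
  rewrite -Rinv_1; apply: Rinv_lt_contravar; lra.
set Lb := ln (/ beta).
have hLb : 0 < Lb by rewrite /Lb -ln_1; apply: ln_increasing; lra.
have hl12 : 0 < ln 12 by rewrite -ln_1; apply: ln_increasing; lra.
set A := 1 + ln 12 / Lb.
have hA : 1 <= A.
  have : 0 <= ln 12 / Lb by apply: Rmult_le_pos; [lra | apply: Rlt_le; apply: Rinv_0_lt_compat].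
  rewrite /A; lra.
have hsA : 1 <= sqrt A by rewrite -sqrt_1; apply: sqrt_le_1_alt.
exists (20 * sqrt A).
move=> eps n d m heps hd hm hmn hdn x hx w [hw0 [hw1 hwm]].
set k := (n %/ d)%N.
have hnk : n = (k * d)%N by rewrite /k divnK.
have hk : (0 < k)%N.
  rewrite lt0n; apply/eqP => hk0; move: hmn hm; rewrite hnk hk0 mul0n => /leP h1 /ltP h2; lia.
have hkr : 0 < INR k by apply: lt_0_INR; apply/ltP.
have hdr : 0 < INR d by apply: lt_0_INR; apply/ltP.
have hd1 : 1 <= INR d by apply: (le_INR 1); apply/leP.
have hnr : INR n = INR k * INR d by rewrite hnk mult_INR.
set L := ln (INR d / beta).
set K0 := ln (12 * INR d / beta).
have hL : Lb <= L.
  rewrite /Lb /L; apply: ln_le'; first by apply: Rinv_0_lt_compat; lra.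
  rewrite /Rdiv -{1}(Rmult_1_l (/ beta)); apply: Rmult_le_compat_r; [apply: Rlt_le; apply: Rinv_0_lt_compat|]; lra.
have hK0 : K0 = ln 12 + L.
  rewrite /K0 /L -ln_mult; [congr ln; rewrite /Rdiv; ring | lra |].
  apply: Rdiv_lt_0_compat; lra.
have hK0A : K0 <= A * L.
  have : 1 <= L / Lb.
    apply: (Rmult_le_reg_r Lb) => //; rewrite /Rdiv Rmult_assoc Rinv_l; lra.
  move=> h; rewrite hK0 /A /Rdiv Rmult_plus_distr_r Rmult_1_l.
  have -> : ln 12 * / Lb * L = ln 12 * (L * / Lb) by ring.
  have := Rmult_le_compat_l (ln 12) _ _ (Rlt_le _ _ hl12) h; lra.
have hK0pos : 0 <= K0 by rewrite hK0; lra.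
set q := sqrt (K0 / INR k).
have hq0 : 0 <= q by apply: sqrt_pos.
have hq2 : INR k * q ^ 2 = K0.
  rewrite /q pow2_sqrt; first by field; lra.
  apply: Rmult_le_pos => //; apply: Rlt_le; apply: Rinv_0_lt_compat; exact: hkr.
set tau := sqrt (INR d / INR n * L).
have hqtau : q <= sqrt A * tau.
  rewrite /q /tau -sqrt_mult; [| lra |].
    apply: sqrt_le_1_alt; rewrite hnr; apply: (Rmult_le_reg_r (INR k)) => //.
    have -> : K0 / INR k * INR k = K0 by field; lra.
    have -> : A * (INR d / (INR k * INR d) * L) * INR k = A * L by field; lra.
    exact: hK0A.
  rewrite hnr; apply: Rmult_le_pos; last by lra.
  apply: Rmult_le_pos; [lra | apply: Rlt_le; apply: Rinv_0_lt_compat; apply: Rmult_lt_0_compat; lra].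
have hs := scale_ge1 heps.
have hmn0 : 0 < INR m / INR n.
  apply: Rdiv_lt_0_compat; first by apply: lt_0_INR; apply/ltP.
  rewrite hnr; apply: Rmult_lt_0_compat; lra.
set B := 20 * sqrt A * rr_scale eps * (tau + INR m / INR n).
have hB1 : 2 * rr_scale eps * (INR m / INR n) + 18 * rr_scale eps * q <= B.
  have h1 : 20 * rr_scale eps * q <= 20 * rr_scale eps * (sqrt A * tau).
    apply: Rmult_le_compat_l => //; lra.
  have h2 : 20 * rr_scale eps * (INR m / INR n) <= 20 * sqrt A * rr_scale eps * (INR m / INR n).
    have : 0 <= rr_scale eps * (INR m / INR n) by apply: Rmult_le_pos; lra.
    nra.
  have h3 : 0 <= rr_scale eps * q by apply: Rmult_le_pos; lra.
  rewrite /B.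
  have -> : 20 * sqrt A * rr_scale eps * (tau + INR m / INR n) =
    20 * rr_scale eps * (sqrt A * tau) + 20 * sqrt A * rr_scale eps * (INR m / INR n) by ring.
  have : 0 <= rr_scale eps * (INR m / INR n) by apply: Rmult_le_pos; lra.
  lra.
have hB2 : 1 < q -> 2 * rr_scale eps < B.
  move=> h; apply: Rlt_le_trans hB1.
  have : 0 < rr_scale eps * (INR m / INR n) by apply: Rmult_lt_0_compat; lra.
  nra.
have he : 5 * INR d * exp (- (INR k * q ^ 2)) <= beta.
  rewrite hq2 exp_Ropp /K0 exp_ln; last by apply: Rdiv_lt_0_compat; lra.
  have -> : 5 * INR d * / (12 * INR d / beta) = 5 / 12 * beta by field; lra.
  lra.
apply: Rle_ge; rewrite /manip_prob.
apply: Rle_trans (_ : \big[Rplus/0]_(a : attacker n d) (w a * (1 - beta)) <= _).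
  rewrite -big_distrl /= hw1; lra.
apply: sumR_le => a _.
case: (Req_dec (w a) 0) => h0; first by rewrite h0 !Rmult_0_l; lra.
apply: Rmult_le_compat_l; first exact: hw0.
exact: (@inner_bound eps n d k m x heps hd hk hnk hx q B beta a (hwm a h0) hm hq0 hB1 hB2 he).
Qed.
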